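(* Let $\mathcal{H}_A,\mathcal{H}_B$ be finite-dimensional Hilbert spaces with fixed reference bases and the product basis on $\mathcal{H}_A\otimes\mathcal{H}_B$. For every state $\rho_{AB}$ with reduced state $\rho_B$, $$C_f(\rho_{AB})\geq C^{A|B}_f(\rho_{AB})+C_f(\rho_B).$$
   Context: $S$ is the von Neumann entropy; for a system with reference basis, $\Delta$ denotes complete dephasing in that basis, and $\Delta_A=\Delta\otimes\mathrm{id}_B$ dephases only $A$. $C_f(\rho)=\min\sum_ip_iS(\Delta(|\psi_i\rangle\langle\psi_i|))$ over pure-state decompositions $\rho=\sum_ip_i|\psi_i\rangle\langle\psi_i|$ (product basis for $\rho_{AB}$). $C^{A|B}_f(\rho_{AB})=\min\sum_ip_iS(\Delta_A(|\psi_i\rangle\langle\psi_i|_{AB}))$ over pure-state decompositions of $\rho_{AB}$. *)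

(* Defs.v *)
From HB Require Import structures.
From mathcomp Require Import all_boot all_order all_algebra.
From mathcomp Require Import complex.
From mathcomp Require Import all_classical all_reals all_analysis.
Set Implicit Arguments. Unset Strict Implicit. Unset Printing Implicit Defensive.
Import Order.TTheory GRing.Theory Num.Theory.
Local Open Scope ring_scope.

Section QDefs.
Variable R : realType.
Local Notation C := R[i].

Definition adjmx m n (A : 'M[C]_(m, n)) : 'M[C]_(n, m) := (map_mx (@conjc R) A)^T.

Definition is_state d (rho : 'M[C]_d) : Prop :=
  [/\ adjmx rho = rho,
      (forall v : 'cV[C]_d, 0 <= (adjmx v *m rho *m v) 0 0)
    & \tr rho = 1].

(* the eigenvalues (with multiplicity) of a square complex matrix: the roots of
   its characteristic polynomial, which splits over the algebraically closed C *)
Definition spectrum d (A : 'M[C]_d) : seq C :=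
  xget [::] [set s : seq C | char_poly A = \prod_(r <- s) ('X - r%:P)].

(* von Neumann entropy S(A) = - sum_lambda lambda ln lambda (natural log,
   with 0 ln 0 = 0); eigenvalues of a state are real, we take real parts *)
Definition vN_entropy d (A : 'M[C]_d) : R :=
  \sum_(r <- spectrum A) - (complex.Re r * ln (complex.Re r)).

Definition dephase d (A : 'M[C]_d) : 'M[C]_d := diag_mx (\row_k A k k).

(* product basis of H_A (x) H_B: index (i,j) |-> mxvec_index i j *)
Definition idx_pair m n (k : 'I_(m * n)) : 'I_m * 'I_n :=
  enum_val (cast_ord (esym (mxvec_cast m n)) k).

Definition dephaseA m n (A : 'M[C]_(m * n)) : 'M[C]_(m * n) :=
  \matrix_(k, l) (if (idx_pair k).1 == (idx_pair l).1 then A k l else 0).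

Definition ptraceA m n (A : 'M[C]_(m * n)) : 'M[C]_n :=
  \matrix_(j, j') \sum_(i < m) A (mxvec_index i j) (mxvec_index i j').

Definition proj d (psi : 'cV[C]_d) : 'M[C]_d := psi *m adjmx psi.

Definition pure_decomp d (rho : 'M[C]_d) k (p : 'I_k -> R) (psi : 'I_k -> 'cV[C]_d) : Prop :=
  [/\ forall i, 0 <= p i,
      \sum_i p i = 1,
      forall i, adjmx (psi i) *m psi i = 1
    & rho = \sum_i (real_complex R (p i)) *: proj (psi i)].

Definition convex_roof d (f : 'cV[C]_d -> R) (rho : 'M[C]_d) : R :=
  inf [set x : R | exists k (p : 'I_k -> R) (psi : 'I_k -> 'cV[C]_d),
                     pure_decomp rho p psi /\ x = \sum_i p i * f (psi i)].

Definition Cf d (rho : 'M[C]_d) : R :=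
  convex_roof (fun psi => vN_entropy (dephase (proj psi))) rho.

Definition CfAB m n (rho : 'M[C]_(m * n)) : R :=
  convex_roof (fun psi => vN_entropy (@dephaseA m n (proj psi))) rho.

End QDefs.

(* Main.v *)
Require Import Defs.
From HB Require Import structures.
From mathcomp Require Import all_boot all_order all_algebra.
From mathcomp Require Import complex.
From mathcomp Require Import all_classical all_reals all_analysis.
From mathcomp Require Import spectral sesquilinear.
From mathcomp Require Import ring lra.
Import Order.TTheory GRing.Theory Num.Theory.
Local Open Scope ring_scope.
Set Implicit Arguments. Unset Strict Implicit. Unset Printing Implicit Defensive.
Section P1.
Variable R : realType.
Local Notation C := R[i].

Definition hh (x : R) : R := - (x * ln x).

Lemma entropy_charpoly d (A : 'M[C]_d) (l : 'I_d -> C) :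
  char_poly A = \prod_k ('X - (l k)%:P) ->
  vN_entropy A = \sum_k hh (complex.Re (l k)).
Proof.
move=> hA; rewrite /vN_entropy /spectrum.
set s := xget _ _.
have hs : char_poly A = \prod_(r <- s) ('X - r%:P).
  rewrite /s; have := @xgetPex _ [::] [set s : seq C | char_poly A = \prod_(r <- s) ('X - r%:P)].
  apply; exists [seq l k | k <- enum 'I_d].
  by rewrite /= big_map big_enum /= hA.
have hp : perm_eq s [seq l k | k <- enum 'I_d].
  by apply: prod_XsubC_eq; rewrite -hs big_map big_enum /= hA.
by rewrite (perm_big _ hp) big_map big_enum.
Qed.

Lemma char_poly_conj d (A P : 'M[C]_d) : P \in unitmx ->
  char_poly (invmx P *m A *m P) = char_poly A.
Proof.
move=> Pu; rewrite /char_poly /char_poly_mx !map_mxM.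
have hQ : map_mx polyC (invmx P) *m map_mx polyC P = 1%:M :> 'M[{poly C}]_d.
  by rewrite -map_mxM mulVmx // map_mx1.
have -> : 'X%:M - map_mx polyC (invmx P) *m map_mx polyC A *m map_mx polyC P =
   map_mx polyC (invmx P) *m ('X%:M - map_mx polyC A) *m map_mx polyC P :> 'M[{poly C}]_d.
  by rewrite mulmxBr mulmxBl mul_mx_scalar -scalemxAl hQ scalemx1.
rewrite !det_mulmx mulrC mulrA -det_mulmx mulmxE.
by rewrite -mulmxE -map_mxM mulmxV // map_mx1 det1 mul1r.
Qed.

Lemma char_poly_diag d (v : 'rV[C]_d) :
  char_poly (diag_mx v) = \prod_k ('X - (v 0 k)%:P).
Proof.
rewrite char_poly_trig; last by apply/is_trig_mxP => i j ij; rewrite mxE; case: eqP => [e|]; [by move: ij; rewrite e ltnn | by rewrite mulr0n].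
by apply: eq_bigr => k _; rewrite mxE eqxx mulr1n.
Qed.

End P1.
Section P2.
Variable R : realType.
Local Notation C := R[i].

Lemma idx_pairK m n (i : 'I_m) (j : 'I_n) : idx_pair (mxvec_index i j) = (i, j).
Proof. by rewrite /idx_pair /mxvec_index cast_ordK enum_rankK. Qed.

Lemma mxvec_index_eq m n (i i' : 'I_m) (j j' : 'I_n) :
  (mxvec_index i j == mxvec_index i' j') = (i == i') && (j == j').
Proof.
apply/eqP/andP => [e|[/eqP-> /eqP->] //].
by have := congr1 (@idx_pair m n) e; rewrite !idx_pairK => -[-> ->].
Qed.

Lemma sum_mn (V : nmodType) m n (F : 'I_(m * n) -> V) :
  \sum_k F k = \sum_i \sum_j F (mxvec_index i j).
Proof.
rewrite pair_big /=.
rewrite (reindex (fun p : 'I_m * 'I_n => mxvec_index p.1 p.2)) /=.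
  by apply: eq_bigr => -[i j].
exists (@idx_pair m n) => [[i j] _|k _]; first by rewrite idx_pairK.
by case/mxvec_indexP: k => i j; rewrite idx_pairK.
Qed.

Lemma adjE m n (A : 'M[C]_(m, n)) : adjmx A = map_mx Num.conj (A^T).
Proof. by rewrite /adjmx map_trmx. Qed.

Lemma adj_entry m n (A : 'M[C]_(m, n)) i j : adjmx A i j = conjc (A j i).
Proof. by rewrite !mxE. Qed.

Lemma adjmxM m n p (A : 'M[C]_(m, n)) (B : 'M[C]_(n, p)) :
  adjmx (A *m B) = adjmx B *m adjmx A.
Proof. by rewrite /adjmx map_mxM trmx_mul. Qed.

Lemma adjmxK m n (A : 'M[C]_(m, n)) : adjmx (adjmx A) = A.
Proof. by apply/matrixP => i j; rewrite !mxE conjcK. Qed.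

End P2.
Section P3.
Local Open Scope sesquilinear_scope.
Variable C : numClosedFieldType.

Lemma complete_unit (n : nat) (u : 'rV[C]_n.+1) : u *m u ^t* = 1%:M ->
  exists U : 'M[C]_n.+1, U *m U ^t* = 1%:M /\ row 0 U = u.
Proof.
move=> hu.
pose A : 'M[C]_n.+1 := \matrix_(r, c) if r == 0 then u 0 c else 0.
pose S := schmidt A.
have SU : S \is unitarymx by apply: schmidt_unitarymx.
have rA : row 0 A = u by apply/rowP => j; rewrite !mxE eqxx.
have := row_schmidt_sub A 0.
rewrite (big_pred1 (0 : 'I_n.+1)); last by move=> k; rewrite /= leqn0.
rewrite genmxE rA => /sub_rVP [c hc].
have s1 : row 0 S *m (row 0 S) ^t* = 1%:M.
  apply/matrixP => i j; rewrite !ord1.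
  have := (row_unitarymxP SU) 0 0; rewrite dotmxE eqxx => ->.
  by rewrite mxE.
have c0 : 0 <= c.
  have := form1_row_schmidt A 0; rewrite dotmxE -/S rA hc -scalemxAl s1.
  by rewrite !mxE eqxx mulr1n mulr1.
have cc : c^* = c by apply: geC0_conj.
have : c * c = 1.
  have := congr1 (fun M : 'M[C]_1 => M 0 0) hu; rewrite /= hc.
  have e : (c *: row 0 S) ^t* = c^* *: (row 0 S) ^t*.
    by apply/matrixP => i j; rewrite !mxE rmorphM.
  rewrite -/S e -scalemxAr -scalemxAl s1 !mxE eqxx mulr1n.
  by rewrite mulr1 cc.
rewrite -expr2 => /eqP; rewrite sqrf_eq1 => /orP[/eqP c1|/eqP cm1].
  exists S; split; first exact/unitarymxP.
  by rewrite hc c1 scale1r.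
by move: c0; rewrite cm1 oppr_ge0 ler10.
Qed.

End P3.
Section P4.
Variable R : realType.
Local Notation C := R[i].
Local Open Scope complex_scope.

Definition nrm2 (z : C) : R := complex.Re z ^+ 2 + complex.Im z ^+ 2.

Lemma mul_conj (z : C) : z * conjc z = (nrm2 z)%:C.
Proof. by case: z => a b; rewrite /nrm2 /=; apply/eqP; rewrite eq_complex /=; apply/andP; split; apply/eqP; ring. Qed.

Lemma conjcM' (x y : C) : conjc (x * y) = conjc x * conjc y.
Proof. by case: x => a b; case: y => c e; apply/eqP; rewrite eq_complex /=; apply/andP; split; apply/eqP; ring. Qed.

Lemma nrm2_1 : nrm2 1 = 1.
Proof. by rewrite /nrm2 /= expr1n expr2 mul0r addr0. Qed.

Lemma nrm2_0 : nrm2 0 = 0.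
Proof. by rewrite /nrm2 /= expr2 mul0r addr0. Qed.

Lemma nrm2_ge0 z : 0 <= nrm2 z.
Proof. by rewrite /nrm2 addr_ge0 // sqr_ge0. Qed.

Lemma nrm2_eq0 z : nrm2 z = 0 -> z = 0.
Proof.
case: z => a b; rewrite /nrm2 /= => /eqP; rewrite paddr_eq0 ?sqr_ge0 // !sqrf_eq0.
by case/andP => /eqP -> /eqP ->.
Qed.

Lemma nrm2_scale (r : R) z : nrm2 (r%:C * z) = r ^+ 2 * nrm2 z.
Proof. by case: z => a b; rewrite /nrm2 /=; ring. Qed.

Lemma nrm2_conj z : nrm2 (conjc z) = nrm2 z.
Proof. by case: z => a b; rewrite /nrm2 /=; ring. Qed.

Lemma hh0 : hh (0 : R) = 0.
Proof. by rewrite /hh mul0r oppr0. Qed.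

Lemma hh_ge0 (x : R) : 0 <= x -> x <= 1 -> 0 <= hh x.
Proof. by move=> x0 x1; rewrite /hh oppr_ge0 mulr_ge0_le0 // ln_le0. Qed.

Lemma hhM (q t : R) : 0 <= q -> 0 <= t -> hh (q * t) = t * hh q + q * hh t.
Proof.
rewrite le0r => /orP[/eqP->|q0]; first by rewrite !(mul0r, mulr0, hh0, addr0).
rewrite le0r => /orP[/eqP->|t0]; first by rewrite !(mul0r, mulr0, hh0, addr0, add0r).
rewrite /hh lnM ?posrE //; ring.
Qed.

Lemma proj_entry d (psi : 'cV[C]_d) k l : Defs.proj psi k l = psi k 0 * conjc (psi l 0).
Proof. by rewrite /Defs.proj mxE big_ord1 !mxE. Qed.

Lemma dephase_proj d (psi : 'cV[C]_d) :
  dephase (Defs.proj psi) = diag_mx (\row_k (nrm2 (psi k 0))%:C).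
Proof.
rewrite /dephase; congr diag_mx; apply/rowP => k.
by rewrite mxE proj_entry mxE mul_conj.
Qed.

Lemma S_dephase d (psi : 'cV[C]_d) :
  vN_entropy (dephase (Defs.proj psi)) = \sum_k hh (nrm2 (psi k 0)).
Proof. by rewrite dephase_proj (entropy_charpoly (char_poly_diag _)); apply: eq_bigr => k _; rewrite mxE. Qed.

Lemma unit_sum d (psi : 'cV[C]_d) : adjmx psi *m psi = 1%:M ->
  \sum_k nrm2 (psi k 0) = 1.
Proof.
move=> /matrixP /(_ 0 0); rewrite !mxE eqxx mulr1n => h.
have : \sum_k (nrm2 (psi k 0))%:C = 1 :> C.
  by rewrite -h; apply: eq_bigr => k _; rewrite !mxE mulrC mul_conj.
by rewrite -rmorph_sum => -[].
Qed.

Lemma S_dephase_ge0 d (psi : 'cV[C]_d) : adjmx psi *m psi = 1%:M ->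
  0 <= vN_entropy (dephase (Defs.proj psi)).
Proof.
move=> /unit_sum h; rewrite S_dephase sumr_ge0 // => k _; apply: hh_ge0; first exact: nrm2_ge0.
rewrite -h (bigD1 k) //= lerDl sumr_ge0 // => j _; exact: nrm2_ge0.
Qed.

End P4.
Section P5.
Variable R : realType.
Local Notation C := R[i].
Local Open Scope complex_scope.
Variables (m n : nat).
Local Notation d := (m * n.+1)%N.

Definition acol (psi : 'cV[C]_d) (i : 'I_m) : 'cV[C]_n.+1 :=
  \col_j psi (mxvec_index i j) 0.
Definition qv (psi : 'cV[C]_d) (i : 'I_m) : R :=
  \sum_j nrm2 (psi (mxvec_index i j) 0).
Definition e0 : 'cV[C]_n.+1 := \col_j (j == 0)%:R.
Definition phi (psi : 'cV[C]_d) i : 'cV[C]_n.+1 :=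
  if 0 < qv psi i then ((Num.sqrt (qv psi i))^-1)%:C *: acol psi i else e0.

Lemma qv_ge0 psi i : 0 <= qv psi i.
Proof. by apply: sumr_ge0 => j _; apply: nrm2_ge0. Qed.

Lemma acol_phi psi i : acol psi i = (Num.sqrt (qv psi i))%:C *: phi psi i.
Proof.
rewrite /phi; case: ifP => q0.
  rewrite scalerA -rmorphM /= divff ?scale1r //.
  by rewrite gt_eqF // sqrtr_gt0.
have q00 : qv psi i = 0 by apply/eqP; rewrite eq_le qv_ge0 andbT leNgt q0.
rewrite q00 sqrtr0 scale0r; apply/colP => j; rewrite !mxE.
apply: nrm2_eq0; apply/eqP; move/eqP: q00; rewrite psumr_eq0; last by move=> k _; apply: nrm2_ge0.
by move/allP => /(_ j (mem_index_enum _)) /=.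
Qed.

Lemma phi_unit psi i : adjmx (phi psi i) *m phi psi i = 1%:M.
Proof.
apply/matrixP => a b; rewrite !ord1 !mxE /=.
under eq_bigr => j _ do rewrite !mxE mulrC mul_conj.
rewrite -rmorph_sum /=.
rewrite /phi; case: ifP => q0.
  under eq_bigr => j _ do rewrite mxE nrm2_scale.
  rewrite -mulr_sumr exprVn sqr_sqrtr ?qv_ge0 //.
  under eq_bigr => j _ do rewrite mxE.
  by rewrite -/(qv psi i) mulVf ?gt_eqF.
rewrite (bigD1 0) //= big1 => [|j /negbTE jn0]; last by rewrite mxE jn0 nrm2_0.
by rewrite mxE eqxx nrm2_1 addr0.
Qed.

Lemma nrm2_a (psi : 'cV[C]_d) (i : 'I_m) (j : 'I_n.+1) : nrm2 (psi (mxvec_index i j) 0) = qv psi i * nrm2 (phi psi i j 0).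
Proof.
have := congr1 (fun v : 'cV[C]_n.+1 => v j 0) (acol_phi psi i).
rewrite /= !mxE => ->; rewrite nrm2_scale sqr_sqrtr // qv_ge0 //.
Qed.

Lemma S_dephase_split psi :
  vN_entropy (dephase (Defs.proj psi)) =
  \sum_i hh (qv psi i) + \sum_i qv psi i * vN_entropy (dephase (Defs.proj (phi psi i))).
Proof.
rewrite S_dephase sum_mn -big_split /=; apply: eq_bigr => i _.
rewrite S_dephase mulr_sumr.
have h1 := unit_sum (phi_unit psi i).
transitivity (\sum_j (nrm2 (phi psi i j 0) * hh (qv psi i) + qv psi i * hh (nrm2 (phi psi i j 0)))).
  apply: eq_bigr => j _; rewrite nrm2_a hhM ?qv_ge0 ?nrm2_ge0 //.
by rewrite big_split /= -mulr_suml h1 mul1r.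
Qed.

Lemma ptrace_proj psi :
  ptraceA (Defs.proj psi) = \sum_i (qv psi i)%:C *: Defs.proj (phi psi i).
Proof.
apply/matrixP => j j'; rewrite !mxE summxE; apply: eq_bigr => i _.
rewrite proj_entry mxE proj_entry.
have := congr1 (fun v : 'cV[C]_n.+1 => v j 0) (acol_phi psi i).
have := congr1 (fun v : 'cV[C]_n.+1 => v j' 0) (acol_phi psi i).
rewrite /= !mxE => -> ->.
rewrite conjcM' conjc_real.
rewrite mulrACA -rmorphM /= -expr2 sqr_sqrtr ?qv_ge0 //.
Qed.


Definition blk (i : 'I_m) (x : 'cV[C]_n.+1) : 'cV[C]_d :=
  \col_l (if (idx_pair l).1 == i then x (idx_pair l).2 0 else 0).

Lemma blk_entry i x i1 j1 : blk i x (mxvec_index i1 j1) 0 = if i1 == i then x j1 0 else 0.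
Proof. by rewrite mxE idx_pairK. Qed.

Lemma dephaseA_decomp psi :
  dephaseA (Defs.proj psi) = \sum_i Defs.proj (blk i (acol psi i)).
Proof.
apply/matrixP => k l; rewrite summxE mxE.
case/mxvec_indexP: k => i1 j1; case/mxvec_indexP: l => i2 j2.
rewrite !idx_pairK /= (bigD1 i1) //= big1 => [|i /negbTE ni].
  rewrite addr0 [RHS]proj_entry !blk_entry eqxx.
  case: (eqVneq i1 i2) => [<-|ne]; first by rewrite proj_entry !mxE.
  by rewrite conjc0 mulr0.
by rewrite proj_entry blk_entry eq_sym ni mul0r.
Qed.

Lemma proj_conj (W : 'M[C]_d) (v : 'cV[C]_d) :
  W *m Defs.proj v *m adjmx W = Defs.proj (W *m v).
Proof. by rewrite /Defs.proj adjmxM !mulmxA. Qed.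

Section WithU.
Variable U : 'I_m -> 'M[C]_n.+1.
Hypothesis Uu : forall i, U i *m adjmx (U i) = 1%:M.

Definition Wm : 'M[C]_d := \matrix_(k, l)
  if (idx_pair k).1 == (idx_pair l).1 then U (idx_pair k).1 (idx_pair k).2 (idx_pair l).2 else 0.

Lemma Wm_entry i1 j1 i2 j2 : Wm (mxvec_index i1 j1) (mxvec_index i2 j2) =
  if i1 == i2 then U i1 j1 j2 else 0.
Proof. by rewrite mxE !idx_pairK. Qed.

Lemma Wm_unit : Wm *m adjmx Wm = 1%:M.
Proof.
apply/matrixP => k l; rewrite mxE sum_mn.
case/mxvec_indexP: k => i1 j1; case/mxvec_indexP: l => i2 j2.
rewrite mxE mxvec_index_eq (bigD1 i1) //=.
rewrite [X in _ + X]big1 => [|i /negbTE ni]; last first.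
  by apply: big1 => j _; rewrite adj_entry !Wm_entry eq_sym ni mul0r.
rewrite addr0.
under eq_bigr => j _ do rewrite adj_entry !Wm_entry eqxx.
case: (eqVneq i2 i1) => [->|ne].
  have := congr1 (fun M : 'M[C]_n.+1 => M j1 j2) (Uu i1).
  by rewrite !mxE => <-; apply: eq_bigr => j _; rewrite !mxE.
rewrite /= big1 // => j _.
by rewrite oppr0 mulr0.
Qed.

Lemma Wm_blk i x : Wm *m blk i x = blk i (U i *m x).
Proof.
apply/colP => k; rewrite mxE sum_mn.
case/mxvec_indexP: k => i1 j1.
rewrite blk_entry (bigD1 i1) //= [X in _ + X]big1 => [|i0 /negbTE ni]; last first.
  by apply: big1 => j _; rewrite Wm_entry eq_sym ni mul0r.
rewrite addr0.
under eq_bigr => j _ do rewrite Wm_entry eqxx blk_entry.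
case: eqP => [->|_]; last by rewrite big1 // => j _; rewrite mulr0.
by rewrite mxE.
Qed.

End WithU.


Lemma blk_e0_sum (s : 'I_m -> R) :
  \sum_i Defs.proj (blk i ((s i)%:C *: e0)) =
  diag_mx (\row_l (if (idx_pair l).2 == 0 then ((s (idx_pair l).1) ^+ 2)%:C else 0)).
Proof.
apply/matrixP => k l; rewrite summxE.
case/mxvec_indexP: k => i1 j1; case/mxvec_indexP: l => i2 j2.
rewrite [RHS]mxE mxE idx_pairK /= mxvec_index_eq.
rewrite (bigD1 i1) //= [X in _ + X]big1 => [|i0 /negbTE ni]; last first.
  by rewrite proj_entry blk_entry eq_sym ni mul0r.
rewrite addr0 proj_entry !blk_entry eqxx !mxE.
case: ifP => [/eqP e|ne]; last first.
  rewrite conjc0 mulr0.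
  have -> : (i1 == i2) = false by apply/eqP => e; move: ne; rewrite e eqxx.
  by rewrite andFb mulr0n.
subst i2; rewrite eqxx /=.
case: ifP => [/eqP e1|ne1]; last by rewrite mulr0 mul0r mul0rn.
subst j1.
have [e2|ne2] := eqVneq j2 0; last first.
  by rewrite !mulr0n !mulr0 conjc0 mulr0.
by rewrite !mulr1n !mulr1 conjc_real -rmorphM /= expr2.
Qed.

Lemma S_dephaseA psi :
  vN_entropy (dephaseA (Defs.proj psi)) = \sum_i hh (qv psi i).
Proof.
have hU : forall i, exists U : 'M[C]_n.+1, U *m adjmx U = 1%:M /\ row 0 U = adjmx (phi psi i).
  move=> i; have [|U [h1 h2]] := @complete_unit _ n (adjmx (phi psi i)).
    by rewrite -adjE adjmxK phi_unit.
  by exists U; rewrite adjE.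
have [U hU'] := fin_all_exists hU.
have Uu : forall i, U i *m adjmx (U i) = 1%:M by move=> i; case: (hU' i).
have U_phi : forall i, U i *m phi psi i = e0.
  move=> i; have := (hU' i).2 => /(congr1 (@adjmx _ _ _)); rewrite adjmxK => <-.
  apply/colP => j; have := congr1 (fun M : 'M[C]_n.+1 => M j 0) (Uu i).
  rewrite !mxE => <-; apply: eq_bigr => k _; rewrite !mxE //.
have U_acol : forall i, U i *m acol psi i = (Num.sqrt (qv psi i))%:C *: e0.
  by move=> i; rewrite acol_phi -scalemxAr U_phi.
set W := Wm U.
have WU := Wm_unit Uu.
have Wunit : W \in unitmx by case/mulmx1_unit: WU.
have Winv : invmx W = adjmx W.
  by rewrite -[invmx W]mulmx1 -WU mulmxA mulVmx // mul1mx.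
have hD : W *m dephaseA (Defs.proj psi) *m adjmx W =
   diag_mx (\row_l (if (idx_pair l).2 == 0 then ((Num.sqrt (qv psi (idx_pair l).1)) ^+ 2)%:C else 0)).
  rewrite dephaseA_decomp mulmx_sumr mulmx_suml -(blk_e0_sum (fun i => Num.sqrt (qv psi i))).
  by apply: eq_bigr => i _; rewrite proj_conj /W Wm_blk // U_acol.
have hB : dephaseA (Defs.proj psi) = invmx W *m diag_mx (\row_l (if (idx_pair l).2 == 0 then ((Num.sqrt (qv psi (idx_pair l).1)) ^+ 2)%:C else 0)) *m W.
  rewrite -hD Winv !mulmxA -{1}Winv mulVmx // mul1mx -mulmxA -Winv mulVmx // mulmx1 //.
rewrite hB (entropy_charpoly (l := fun l => (\row_l (if (idx_pair l).2 == 0 then ((Num.sqrt (qv psi (idx_pair l).1)) ^+ 2)%:C else 0)) 0 l)); last first.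
  by rewrite char_poly_conj // char_poly_diag.
rewrite sum_mn; apply: eq_bigr => i _.
rewrite big_ord_recl mxE idx_pairK /= sqr_sqrtr ?qv_ge0 // big1 ?addr0 // => j _.
by rewrite mxE idx_pairK /= hh0.
Qed.

End P5.

Section P8.
Variable R : realType.
Local Notation C := R[i].
Local Open Scope complex_scope.
Local Open Scope classical_set_scope.

Lemma CR_le d (f : 'cV[C]_d -> R) (rho : 'M[C]_d) k (p : 'I_k -> R) psi :
  (forall v : 'cV[C]_d, adjmx v *m v = 1%:M -> 0 <= f v) ->
  pure_decomp rho p psi -> convex_roof f rho <= \sum_i p i * f (psi i).
Proof.
move=> hf hd; rewrite /convex_roof; apply: ge_inf; last by exists k, p, psi.
exists 0 => x [k' [p' [psi' [[hp _ hu _] ->]]]].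
by apply: sumr_ge0 => i _; rewrite mulr_ge0 // hf.
Qed.

Lemma CR_ge d (f : 'cV[C]_d -> R) (rho : 'M[C]_d) (c : R) :
  (exists k (p : 'I_k -> R) psi, pure_decomp rho p psi) ->
  (forall k (p : 'I_k -> R) psi, pure_decomp rho p psi -> c <= \sum_i p i * f (psi i)) ->
  c <= convex_roof f rho.
Proof.
move=> [k [p [psi hd]]] hc; apply: lb_le_inf.
  by exists (\sum_i p i * f (psi i)), k, p, psi.
by move=> x [k' [p' [psi' [hd' ->]]]]; apply: hc.
Qed.

End P8.

Section P9.
Variable R : realType.
Local Notation C := R[i].
Local Open Scope complex_scope.
Variables (m n : nat).
Local Notation d := (m * n.+1)%N.

Lemma ptrace_lin k (c : 'I_k -> C) (M : 'I_k -> 'M[C]_d) :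
  ptraceA (\sum_l c l *: M l) = \sum_l c l *: ptraceA (M l).
Proof.
apply/matrixP => j j'; rewrite !mxE summxE.
under eq_bigr => i _ do rewrite summxE.
rewrite exchange_big /=; apply: eq_bigr => l _.
rewrite !mxE mulr_sumr; apply: eq_bigr => i _; rewrite !mxE //.
Qed.

Lemma qv_sum (psi : 'cV[C]_d) : adjmx psi *m psi = 1%:M -> \sum_i qv psi i = 1.
Proof. by move=> /unit_sum; rewrite sum_mn. Qed.

Lemma SA_ge0 (psi : 'cV[C]_d) : adjmx psi *m psi = 1%:M ->
  0 <= vN_entropy (@dephaseA R m n.+1 (Defs.proj psi)).
Proof.
move=> /qv_sum h; rewrite S_dephaseA sumr_ge0 // => i _; apply: hh_ge0; first exact: qv_ge0.
rewrite -h (bigD1 i) //= lerDl sumr_ge0 // => j _; exact: qv_ge0.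
Qed.

Lemma decomp_B (rho : 'M[C]_d) k (p : 'I_k -> R) psi :
  pure_decomp rho p psi ->
  pure_decomp (ptraceA rho)
    (fun l : 'I_(k * m) => p (idx_pair l).1 * qv (psi (idx_pair l).1) (idx_pair l).2)
    (fun l : 'I_(k * m) => phi (psi (idx_pair l).1) (idx_pair l).2).
Proof.
move=> [hp hs hu ->]; split.
- by move=> l; rewrite mulr_ge0 // qv_ge0.
- rewrite sum_mn -{}hs; apply: eq_bigr => i _.
  under eq_bigr => j _ do rewrite idx_pairK.
  by rewrite /= -mulr_sumr qv_sum // mulr1.
- by move=> l; apply: phi_unit.
- rewrite ptrace_lin sum_mn; apply: eq_bigr => i _.
  rewrite ptrace_proj scaler_sumr; apply: eq_bigr => j _.
  by rewrite idx_pairK /= scalerA -rmorphM.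
Qed.

Lemma main_bound (rho : 'M[C]_d) k (p : 'I_k -> R) psi :
  pure_decomp rho p psi ->
  @CfAB R m n.+1 rho + Cf (@ptraceA R m n.+1 rho) <=
  \sum_i p i * vN_entropy (dephase (Defs.proj (psi i))).
Proof.
move=> hd.
have h1 := CR_le (@SA_ge0) hd.
have h2 := CR_le (@S_dephase_ge0 R n.+1) (decomp_B hd).
rewrite /CfAB /Cf; apply: le_trans (lerD h1 h2) _; rewrite le_eqVlt; apply/orP; left; apply/eqP.
rewrite sum_mn -big_split /=; apply: eq_bigr => i _.
rewrite S_dephase_split mulrDr; congr (_ + _); first by rewrite S_dephaseA.
rewrite mulr_sumr; apply: eq_bigr => j _; rewrite idx_pairK /= mulrA //.
Qed.

End P9.

Section P10.
Variable R : realType.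
Local Notation C := R[i].
Local Open Scope complex_scope.

Lemma adj_delta m n (i : 'I_m) (j : 'I_n) : adjmx (delta_mx i j : 'M[C]_(m, n)) = delta_mx j i.
Proof.
apply/matrixP => a b; rewrite !mxE.
by case: (a == j); case: (b == i) => /=; rewrite ?conjc0 //= oppr0.
Qed.

Lemma decomp_exists d (rho : 'M[C]_d) : is_state rho ->
  exists k (p : 'I_k -> R) psi, pure_decomp rho p psi.
Proof.
move=> [hh hpsd htr].
have normal : rho \is normalmx.
  by apply/normalmxP; rewrite -adjE hh.
set P := spectralmx rho; set sp := spectral_diag rho.
have hP : rho = invmx P *m diag_mx sp *m P by apply/orthomx_spectralP.
have PU : P \is unitarymx by apply: spectral_unitarymx.
have Pinv : invmx P = adjmx P by rewrite adjE; apply: invmx_unitary.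
have Pu : P *m adjmx P = 1%:M by rewrite adjE; apply/unitarymxP.
have Punit : P \in unitmx by apply: unitarymx_unit.
have Pu' : adjmx P *m P = 1%:M by rewrite -Pinv mulVmx.
pose u k : 'cV[C]_d := adjmx (row k P).
have hu : forall k, u k = adjmx P *m delta_mx k 0.
  by move=> k; rewrite /u rowE adjmxM adj_delta.
have hu' : forall k, adjmx (u k) = delta_mx 0 k *m P.
  by move=> k; rewrite /u adjmxK rowE.
have quad : forall k, adjmx (u k) *m rho *m u k = (sp 0 k)%:M.
  move=> k; rewrite hu' hu hP Pinv !mulmxA.
  rewrite -[X in X *m diag_mx sp]mulmxA Pu mulmx1.
  rewrite -[X in X *m delta_mx k 0]mulmxA Pu mulmx1.
  apply/matrixP => a b; rewrite !ord1 !mxE (bigD1 k) //= big1 => [|j /negbTE nj].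
    rewrite !mxE !eqxx /= mulr1 addr0 mulr1n (bigD1 k) //= big1 => [|j /negbTE nj].
      by rewrite !mxE !eqxx /= mul1r mulr1n addr0.
    by rewrite !mxE nj andbF mul0r.
  by rewrite !mxE nj andFb mulr0.
have spr : forall k, sp 0 k = (complex.Re (sp 0 k))%:C /\ 0 <= complex.Re (sp 0 k).
  move=> k; have := hpsd (u k); rewrite quad mxE eqxx mulr1n.
  by case: (sp 0 k) => a b; rewrite lecE /= => /andP[/eqP -> ->].
exists d, (fun k => complex.Re (sp 0 k)), u; split.
- by move=> k; case: (spr k).
- have : \sum_k (complex.Re (sp 0 k))%:C = 1 :> C.
    rewrite -htr hP mxtrace_mulC mulmxA mulmxV // mul1mx mxtrace_diag.
    by apply: eq_bigr => k _; rewrite -(spr k).1.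
  by rewrite -rmorph_sum => -[].
- move=> k; rewrite hu' hu !mulmxA -[_ *m P *m _]mulmxA Pu mulmx1 mul_delta_mx.
  by apply/matrixP => a b; rewrite !ord1 !mxE !eqxx.
- rewrite {1}hP Pinv diag_mx_sum_delta mulmx_sumr mulmx_suml; apply: eq_bigr => k _.
  rewrite -(spr k).1 /Defs.proj hu' hu -scalemxAr -scalemxAl; congr (_ *: _).
  by rewrite !mulmxA -[_ *m delta_mx k 0 *m delta_mx 0 k]mulmxA mul_delta_mx.
Qed.

End P10.

Theorem lemma3 (R : realType) (m n : nat) (rho : 'M[R[i]]_(m * n)) :
  is_state rho -> @CfAB R m n rho + Cf (@ptraceA R m n rho) <= Cf rho.
Proof.
case: n rho => [|n] rho hs.
  exfalso; case: hs => _ _ htr; move: htr.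
  rewrite /mxtrace big1 => [/esym/eqP|k _]; first by rewrite oner_eq0.
  by exfalso; have := ltn_ord k; move: (nat_of_ord k) => x; rewrite muln0.
rewrite [X in _ <= X]/Cf; apply: CR_ge; first exact: decomp_exists.
by move=> k p psi hd; apply: main_bound.
Qed.
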